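(* Let $\Delta\subseteq\{0,1\}^N$, $g:\Delta\to\{0,1\}$ a partial Boolean function, and $\delta\in(0,1/2)$. Let $V_1=g^{-1}(1)$ and $V_0=g^{-1}(0)$ (assumed nonempty). Suppose that for some number $K>0$ there is a bipartite graph $H=(V_1\cup V_0,E)$ such that: (i) for every edge $(x,y)\in E$ with $x\in V_1$, $y\in V_0$, there is a sensitive block $B$ of $g$ on $x$ with $y=x^B$; (ii) every $x\in V_1$ has degree $\deg(x)\ge 2K$ in $H$, and the sensitive blocks $B_{x,1},\dots,B_{x,\deg(x)}$ on $x$ corresponding to the edges incident to $x$ are pairwise disjoint; (iii) every $y\in V_0$ has degree at most $d=\left(\frac{1}{2\delta}-1\right)K\frac{|V_1|}{|V_0|}$ in $H$. Then $C_\delta(g)\ge K$.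
   Context: For $x\in\{0,1\}^N$ and $B\subseteq\{1,\dots,N\}$, $x^B$ denotes $x$ with every bit indexed by $B$ flipped. A sensitive block of $g$ on $x\in\Delta$ is a set $B$ such that $x^B\in\Delta$ and $g(x^B)\ne g(x)$. Canonical distribution $\mathcal{D}_g$ on $\Delta$: with probability $1/2$ a uniform element of $g^{-1}(1)$, with probability $1/2$ a uniform element of $g^{-1}(0)$. A certificate of $f:\Delta\to\{0,1\}$ on $x\in\Delta$ is a set $C\subseteq\{1,\dots,N\}$ such that every $y\in\Delta$ with $y|_C=x|_C$ has $f(y)=f(x)$; $C(f)=\max_{x\in\Delta}\min\{|C|: C\text{ certificate of } f \text{ on }x\}$. The $\delta$-approximate certificate complexity is $C_\delta(g)=\min\{C(f): f:\Delta\to\{0,1\},\ \Pr_{x\sim\mathcal{D}_g}[f(x)\ne g(x)]\le\delta\}$. *)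

(* Defs.v *)
From mathcomp Require Import all_boot all_order all_algebra.
Set Implicit Arguments. Unset Strict Implicit. Unset Printing Implicit Defensive.
Import Order.TTheory GRing.Theory Num.Theory.

Notation cube N := {ffun 'I_N -> bool}.

Definition flip N (x : cube N) (B : {set 'I_N}) : cube N :=
  [ffun i => if i \in B then ~~ x i else x i].

Definition sensitive_block N (D : {set cube N}) (g : cube N -> bool)
  (x : cube N) (B : {set 'I_N}) : bool :=
  (flip x B \in D) && (g (flip x B) != g x).

Definition is_cert N (D : {set cube N}) (f : cube N -> bool)
  (x : cube N) (C : {set 'I_N}) : bool :=
  [forall y in D, [forall i in C, y i == x i] ==> (f y == f x)].

(* min size of a certificate of f on x; the full set is always a
   certificate, so the default value N is never the result of an empty min *)
Definition cert_size N (D : {set cube N}) (f : cube N -> bool) (x : cube N) : nat :=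
  \big[minn/N]_(C : {set 'I_N} | is_cert D f x C) #|C|.

Definition cert_compl N (D : {set cube N}) (f : cube N -> bool) : nat :=
  \max_(x in D) cert_size D f x.

Definition ones N (D : {set cube N}) (g : cube N -> bool) := [set x in D | g x].
Definition zeros N (D : {set cube N}) (g : cube N -> bool) := [set x in D | ~~ g x].

Local Open Scope ring_scope.

(* Pr_{x ~ D_g}[f x <> g x] for the canonical distribution D_g *)
Definition canon_err (R : realFieldType) N (D : {set cube N}) (g : cube N -> bool)
  (f : cube N -> bool) : R :=
  2^-1 * (#|[set x in ones D g | f x != g x]|%:R / #|ones D g|%:R)
  + 2^-1 * (#|[set x in zeros D g | f x != g x]|%:R / #|zeros D g|%:R).

(* C_delta(g) = min { C(f) : f : D -> {0,1}, err <= delta }; f is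
   represented by a total function whose values outside D are irrelevant.
   f = g always qualifies, so the default N is never returned vacuously. *)
Definition approx_cert (R : realFieldType) N (D : {set cube N}) (g : cube N -> bool)
  (delta : R) : nat :=
  \big[minn/N]_(f : {ffun cube N -> bool} | @canon_err R N D g f <= delta)
     cert_compl D f.

(* Main.v *)
Require Import Defs.

From mathcomp Require Import all_boot all_order all_algebra.
From mathcomp Require Import ring lra.
Import Order.TTheory GRing.Theory Num.Theory.

Lemma cert_exists N (D : {set cube N}) (f : cube N -> bool) x :
  exists C, is_cert D f x C /\ #|C| <= cert_size D f x.
Proof.
rewrite /cert_size.
apply: (big_ind (fun n => exists C, is_cert D f x C /\ #|C| <= n)).
- exists setT; split; last by rewrite cardsT card_ord.
  apply/forallP => y; apply/implyP => _; apply/implyP => /forallP H.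
  have -> : y = x by apply/ffunP => i; have := H i; rewrite in_setT => /eqP.
  by [].
- move=> a b [C1 [h1 l1]] [C2 [h2 l2]]; case: (leqP a b) => hab.
  + exists C1; split => //; by rewrite (minn_idPl hab).
  + exists C2; split => //; by rewrite (minn_idPr (ltnW hab)).
- by move=> C hC; exists C.
Qed.

Lemma card_split (T : finType) (A : {set T}) (P : pred T) :
  (#|[set x in A | P x]| + #|[set x in A | ~~ P x]|)%N = #|A|.
Proof.
rewrite -(cardsID [set x | P x] A); congr (_ + _)%N; apply: eq_card => x; by rewrite !inE // andbC.
Qed.

Local Open Scope ring_scope.

Lemma alg (R : realFieldType) (d a b t : R) : 0 < d -> d < 2^-1 -> 0 <= a -> 0 <= b ->
  a + b <= 2 * d -> t * (2 * d) = 1 -> 1 - a <= (t - 1) * b -> False.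
Proof.
move=> d0 d1 a0 b0 hab ht h.
have h2 : (2 * d) * (1 - a) <= (1 - 2 * d) * b.
  have := ler_wpM2l (ltW (mulr_gt0 (ltr0Sn _ 1) d0)) h.
  have -> : 2 * d * ((t - 1) * b) = (t * (2 * d)) * b - 2 * d * b by ring.
  rewrite ht => hh; lra.
have h3 : (1 - 2 * d) * b <= (1 - 2 * d) * (2 * d - a).
  apply: ler_wpM2l; first lra. lra.
have hd : 0 < d * (1 - 2 * d) by apply: mulr_gt0; lra.
case: (lerP (4 * d) 1) => h4.
- have : 0 <= a * (1 - 4 * d) by apply: mulr_ge0; lra.
  nra.
- have : 0 <= (2 * d - a) * (4 * d - 1) by apply: mulr_ge0; lra.
  nra.
Qed.
Section Main.
Variables (R : realFieldType) (N : nat) (D : {set cube N})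
  (g : cube N -> bool) (delta K : R)
  (E : {set cube N * cube N}) (blk : cube N -> cube N -> {set 'I_N}).
Hypothesis HE : forall x y, (x, y) \in E -> (x \in ones D g) && (y \in zeros D g).
Hypothesis HB : forall x y, (x, y) \in E -> sensitive_block D g x (blk x y) && (y == flip x (blk x y)).
Hypothesis Hdeg : forall x, x \in ones D g -> 2 * K <= #|[set y | (x, y) \in E]|%:R.
Hypothesis Hdis : forall x y y', (x, y) \in E -> (x, y') \in E -> y != y' ->
     [disjoint blk x y & blk x y'].

Lemma local_count (f : cube N -> bool) x (C : {set 'I_N}) : x \in ones D g -> f x = g x ->
  is_cert D f x C -> #|C|%:R < K ->
  K < #|[set y in zeros D g | (f y != g y) && ((x,y) \in E)]|%:R.
Proof.
move=> x1 fx hC hCK.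
set S := [set y | (x,y) \in E].
set Bad := [set y in S | blk x y :&: C != set0].
pose h := fun y => [pick i in blk x y :&: C].
have hBad : (#|Bad| <= #|C|)%N.
  have inj : {in Bad &, injective h}.
    move=> y y'; rewrite !inE => /andP[yS ny] /andP[y'S ny'].
    rewrite /h; case: pickP => [i hi|H]; last first.
      by move/set0Pn: ny => [j hj]; have := H j; rewrite hj.
    case: pickP => [i' hi'|H]; last first.
      by move/set0Pn: ny' => [j hj]; have := H j; rewrite hj.
    move=> [ei]; subst i'.
    apply/eqP; apply: contraT => neq.
    have := disjointFr (Hdis _ _ _ yS y'S neq); rewrite inE in hi; case/andP: hi => hi _.
    move=> /(_ i hi); rewrite inE in hi'; case/andP: hi' => -> _ //.
  rewrite -(card_in_imset inj) -(card_imset C (@Some_inj _)).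
  apply: subset_leq_card; apply/subsetP => o /imsetP [y yB ->].
  move: yB; rewrite inE => /andP[_ ny].
  rewrite /h; case: pickP => [i hi|H]; last first.
    by move/set0Pn: ny => [j hj]; have := H j; rewrite hj.
  apply/imsetP; exists i => //; by move: hi; rewrite inE => /andP[_ ->].
have hGood : S :\: Bad \subset [set y in zeros D g | (f y != g y) && ((x,y) \in E)].
  apply/subsetP => y; rewrite in_setD => /andP[nb yS].
  have yE : (x,y) \in E by move: yS; rewrite inE.
  have Be : blk x y :&: C == set0 by move: nb; rewrite inE yS /= negbK.
  have /andP[_ y0] := HE _ _ yE.
  have /andP[sb /eqP ey] := HB _ _ yE.
  move: y0; rewrite inE => /andP[yD gy].
  rewrite !inE yD gy yE /=.
  have : f y == f x.
    move: hC => /forallP/(_ y)/implyP/(_ yD)/implyP; apply.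
    apply/forallP => i; apply/implyP => iC.
    have nib : i \notin blk x y.
      apply/negP => ib; move/eqP/setP/(_ i): Be; rewrite !inE ib iC //.
    rewrite {1}ey /flip ffunE (negbTE nib) //.
  move/eqP ->; rewrite fx; move: x1; rewrite inE => /andP[_ ->].
  by move: gy; case: (g y).
have hS := cardsID Bad S.
have hSB : (#|S :&: Bad| <= #|Bad|)%N by apply: subset_leq_card; apply: subsetIr.
have hG := subset_leq_card hGood.
have hd := Hdeg _ x1.
rewrite -/S in hd.
move: hS => /(congr1 (fun n : nat => n%:R : R)); rewrite natrD => hS.
move: hSB hG hBad; rewrite -!(ler_nat R) => hSB hG hBad.
lra.
Qed.
End Main.
Local Open Scope ring_scope.

Theorem theorem5p10 (R : realFieldType) (N : nat) (D : {set cube N})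
  (g : cube N -> bool) (delta K : R)
  (E : {set cube N * cube N}) (blk : cube N -> cube N -> {set 'I_N}) :
  0 < delta -> delta < 2^-1 ->
  ones D g != set0 -> zeros D g != set0 ->
  0 < K ->
  (* H is a bipartite graph between V_1 and V_0 *)
  (forall x y, (x, y) \in E -> (x \in ones D g) && (y \in zeros D g)) ->
  (* (i) each edge corresponds to a sensitive block on x *)
  (forall x y, (x, y) \in E -> sensitive_block D g x (blk x y) && (y == flip x (blk x y))) ->
  (* (ii) degree >= 2K and pairwise disjoint blocks *)
  (forall x, x \in ones D g ->
     2 * K <= #|[set y | (x, y) \in E]|%:R) ->
  (forall x y y', (x, y) \in E -> (x, y') \in E -> y != y' ->
     [disjoint blk x y & blk x y']) ->
  (* (iii) degree bound on V_0 *)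
  (forall y, y \in zeros D g ->
     #|[set x | (x, y) \in E]|%:R
       <= ((2 * delta)^-1 - 1) * K * (#|ones D g|%:R / #|zeros D g|%:R)) ->
  K <= (approx_cert D g delta)%:R.
Proof.
move=> d0 d1 ne1 ne0 K0 HE HB Hdeg Hdis Hd0.
have main : forall f : {ffun cube N -> bool}, canon_err R D g f <= delta -> K <= (cert_compl D f)%:R.
  move=> f herr; rewrite leNgt; apply/negP => hlt.
  have cs : forall x, x \in D -> exists C, is_cert D f x C /\ #|C|%:R < K.
    move=> x xD; have [C [hC hle]] := cert_exists N D f x; exists C; split => //.
    apply: le_lt_trans hlt; rewrite ler_nat; apply: leq_trans hle _.
    rewrite /cert_compl; exact: (@leq_bigmax_cond _ (fun y => y \in D) (fun x => cert_size D f x) x xD).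
  set V1 := ones D g in ne1 HE Hdeg Hd0 herr *.
  set V0 := zeros D g in ne0 HE Hd0 herr *.
  set A1 := [set x in V1 | f x == g x].
  set Z0 := [set y in V0 | f y != g y] in herr *.
  pose Ebad := fun x => [set y in V0 | (f y != g y) && ((x,y) \in E)].
  have key : forall x, x \in A1 -> K <= #|Ebad x|%:R.
    move=> x; rewrite inE => /andP[x1 /eqP fx].
    have xD : x \in D by move: x1; rewrite inE => /andP[].
    have [C [hC hCK]] := cs x xD; apply/ltW.
    exact: (@local_count R N D g K E blk HE HB Hdeg Hdis f x C x1 fx hC hCK).
  have sum1 : K * #|A1|%:R <= \sum_(x in A1) (#|Ebad x|%:R : R).
    by rewrite mulr_natr -sumr_const; apply: ler_sum => x xA; exact: key.
  have dbl : (\sum_(x in A1) #|Ebad x| <= \sum_(y in Z0) #|[set x | (x,y) \in E]|)%N.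
    have e1 : forall x, #|Ebad x| = (\sum_(y | (y \in Z0) && ((x,y) \in E)) 1)%N.
      by move=> x; rewrite -sum1_card; apply: eq_bigl => y; rewrite !inE andbA.
    rewrite (eq_bigr (fun x => \sum_(y | (y \in Z0) && ((x,y) \in E)) 1)%N); last by move=> x _; exact: e1.
    rewrite (exchange_big_dep (fun y => y \in Z0)) /=; last by move=> i j _ /andP[].
    apply: leq_sum => y yZ.
    rewrite -sum1_card [in X in (_ <= X)%N]big_mkcond [in X in (X <= _)%N]big_mkcond /=.
    apply: leq_sum => x _.
    rewrite yZ !inE; case: ((x, y) \in E); rewrite ?andbF ?andbT //; by case: ifP.
  pose dd := ((2 * delta)^-1 - 1) * K * (#|V1|%:R / #|V0|%:R).
  have hz : \sum_(y in Z0) (#|[set x | (x,y) \in E]|%:R : R) <= #|Z0|%:R * dd.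
    rewrite mulrC mulr_natr -sumr_const; apply: ler_sum => y.
    by rewrite inE => /andP[y0 _]; exact: Hd0.
  have H1 : K * #|A1|%:R <= #|Z0|%:R * dd.
    apply: le_trans sum1 _; rewrite -natr_sum; apply: le_trans hz.
    by rewrite -natr_sum ler_nat.
  have n1p : 0 < (#|V1|%:R : R) by rewrite ltr0n card_gt0.
  have n0p : 0 < (#|V0|%:R : R) by rewrite ltr0n card_gt0.
  have split1 := card_split _ V1 (fun x => f x == g x).
  set e1 := #|[set x in V1 | f x != g x]| in split1 herr.
  pose a := (e1%:R / #|V1|%:R : R).
  pose b := (#|Z0|%:R / #|V0|%:R : R).
  pose t := (2 * delta)^-1.
  have hc : (#|A1|%:R : R) = #|V1|%:R - e1%:R by rewrite -split1 natrD addrK.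
  have ea : K * #|A1|%:R = (K * #|V1|%:R) * (1 - a).
    rewrite hc /a; field; by rewrite gt_eqF.
  have eb : #|Z0|%:R * dd = (K * #|V1|%:R) * ((t - 1) * b).
    rewrite /dd /b /t; field; by rewrite !gt_eqF.
  rewrite ea eb ler_pM2l ?mulr_gt0 // in H1.
  apply: (@alg R delta a b t d0 d1) => //.
  - by rewrite /a divr_ge0.
  - by rewrite /b divr_ge0.
  - rewrite /canon_err -/a -/b in herr; lra.
  - by rewrite /t mulVf // mulf_neq0 // gt_eqF.
rewrite /approx_cert.
apply: (big_ind (fun n : nat => K <= n%:R)).
- have := main [ffun x => g x].
  have -> : canon_err R D g [ffun x => g x] = 0.
    rewrite /canon_err.
    have -> : [set x in ones D g | [ffun x0 => g x0] x != g x] = set0.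
      by apply/setP => x; rewrite !inE ffunE eqxx andbF.
    have -> : [set x in zeros D g | [ffun x0 => g x0] x != g x] = set0.
      by apply/setP => x; rewrite !inE ffunE eqxx andbF.
    by rewrite cards0 !mul0r mulr0 addr0.
  move=> /(_ (ltW d0)) hK; apply: le_trans hK _; rewrite ler_nat.
  apply/bigmax_leqP => x _.
  rewrite /cert_size; apply: (big_ind (fun n => n <= N)%N) => //.
  + by move=> p q hp hq; rewrite geq_min hp.
  + by move=> C _; rewrite -[X in (_ <= X)%N](card_ord N) max_card.
- by move=> p q hp hq; case: (leqP p q).
- by move=> f hf; exact: main.
Qed.
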